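(* Let $\lambda,\mu\in\mathcal{A}_{k,n}$ and $\nu\in\mathcal{P}_k^+$, and let $\check\nu\in\mathcal{A}_{k,n}$ be the unique element of the orbit $\nu\hat S_k$ lying in $\mathcal{A}_{k,n}$. Then $$N^\lambda_{\mu\nu}=N^\lambda_{\mu\check\nu}\binom{m_n(\check\nu)}{m_0(\nu),m_n(\nu),m_{2n}(\nu),\dots}\prod_{i=1}^{n-1}\binom{m_i(\check\nu)}{m_i(\nu),m_{i+n}(\nu),m_{i+2n}(\nu),\dots}.$$
   Context: Fix $k,n\ge1$. $\mathcal{P}_k^+$ is the set of $\nu\in\mathbb{Z}^k$ with $\nu_1\ge\cdots\ge\nu_k\ge0$; each such $\nu$ is extended to $\nu:\mathbb{Z}\to\mathbb{Z}$ by $\nu_{i+k}=\nu_i-n$. $\mathcal{A}_{k,n}$ is the set of such functions with $n\ge\nu_1\ge\cdots\ge\nu_k>0$. $\hat S_k$ is the group of bijections of $\mathbb{Z}$ generated by $\tau(m)=m-1$ and $\sigma_i$ ($0\le i<k$; $\sigma_i(m)=m+1$ if $m\equiv i$, $m-1$ if $m\equiv i+1$, $m$ otherwise, mod $k$), acting by $(\nu\circ\hat w)_i=\nu_{\hat w(i)}$; $\mathcal{A}_{k,n}$ meets each orbit in exactly one point. $m_j(\nu)=\#\{i\in[k]:\nu_i=j\}$. For $\nu\in\mathbb{Z}^k$ and $w\in S_k$, $\nu\circ w=(\nu_{w(1)},\dots,\nu_{w(k)})$; $S_\nu$ is its stabiliser and $S^\nu$ the minimal length representatives of $S_\nu\backslash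 S_k$. For $\lambda,\mu\in\mathcal{A}_{k,n}$, $\nu\in\mathcal{P}_k^+$: $N^\lambda_{\mu\nu}=\#\{(w,w')\in S^\mu\times S^\nu:\mu\circ w+\nu\circ w'=(\lambda_1+n\alpha_1,\dots,\lambda_k+n\alpha_k)\text{ for some }\alpha\in\mathbb{Z}^k\text{ with }\sum\alpha_i=d\}$, where $d=(|\mu|+|\nu|-|\lambda|)/n$ and $|\cdot|$ is the sum of the $k$ entries (these are the coefficients of $h_\nu$ in the expansion of the cylindric complete symmetric function $h_{\lambda/d/\mu}$). *)

(* Defs.v *)
From mathcomp Require Import all_boot all_order all_algebra all_fingroup.
From mathcomp Require Import boolp.
Set Implicit Arguments. Unset Strict Implicit. Unset Printing Implicit Defensive.
Import Order.TTheory GRing.Theory Num.Theory.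
Local Open Scope ring_scope.

(* A vector nu in Z^k is a function 'I_k -> int; index i : 'I_k stands for
   the paper's index i+1 in [k] = {1,...,k}. *)

Definition inP (k : nat) (nu : 'I_k -> int) : Prop :=
  (forall i j : 'I_k, (i <= j)%N -> nu j <= nu i) /\ (forall i, 0 <= nu i).

Definition inA (k n : nat) (nu : 'I_k -> int) : Prop :=
  (forall i j : 'I_k, (i <= j)%N -> nu j <= nu i) /\
  (forall i, 0 < nu i /\ nu i <= n%:Z).

(* Extension of nu to Z -> Z with nu_{i+k} = nu_i - n (paper indexing:
   ext_aff nu i for i = 1..k is nu_i).  Writing i - 1 = q k + r, 0 <= r < k,
   ext_aff nu i = nu_{r+1} - q n. *)
Definition ext_aff (k n : nat) (nu : 'I_k -> int) (i : int) : int :=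
  let r := ((i - 1) %% k%:Z)%Z in
  let q := ((i - 1) %/ k%:Z)%Z in
  odflt 0 (omap nu (insub `|r|%N)) - q * n%:Z.

(* Generators of the extended affine symmetric group hat S_k *)
Definition tau (m : int) : int := m - 1.
Definition tauinv (m : int) : int := m + 1.
Definition sigma (k : nat) (i : nat) (m : int) : int :=
  if (k%:Z %| m - i%:Z)%Z then m + 1
  else if (k%:Z %| m - (i.+1)%:Z)%Z then m - 1
  else m.

Inductive gen := GTau | GTauInv | GSigma of nat.

Definition gen_ok (k : nat) (g : gen) : bool :=
  if g is GSigma i then (i < k)%N else true.

Definition gen_fun (k : nat) (g : gen) : int -> int :=
  match g with GTau => tau | GTauInv => tauinv | GSigma i => sigma k i end.

Definition word_fun (k : nat) (ws : seq gen) : int -> int :=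
  foldr (fun g f => (gen_fun k g) \o f) id ws.

Definition in_hatS (k : nat) (f : int -> int) : Prop :=
  exists ws : seq gen, all (gen_ok k) ws /\ f =1 word_fun k ws.

Definition in_aff_orbit (k n : nat) (nu rho : 'I_k -> int) : Prop :=
  exists w, in_hatS k w /\ forall i : int, ext_aff n rho i = ext_aff n nu (w i).

Definition mult_of (k : nat) (nu : 'I_k -> int) (j : int) : nat :=
  #|[pred i : 'I_k | nu i == j]|.

(* Coxeter length of w in S_k = number of inversions *)
Definition perm_length (k : nat) (w : 'S_k) : nat :=
  #|[pred p : 'I_k * 'I_k | (p.1 < p.2)%N && (w p.2 < w p.1)%N]|.

Definition vact (k : nat) (nu : 'I_k -> int) (w : 'S_k) : 'I_k -> int :=
  fun i => nu (w i).

Definition in_stab (k : nat) (nu : 'I_k -> int) (u : 'S_k) : bool :=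
  [forall i, vact nu u i == nu i].

(* w in S^nu : w has minimal length in its right coset S_nu w = {u o w}.
   In mathcomp, (w * u) x = u (w x), i.e. w * u is the composite u o w. *)
Definition in_minrep (k : nat) (nu : 'I_k -> int) (w : 'S_k) : bool :=
  [forall u : 'S_k, in_stab nu u ==> (perm_length w <= perm_length (w * u)%g)%N].

Definition vsum (k : nat) (nu : 'I_k -> int) : int := \sum_i nu i.

Definition Ncoef (k n : nat) (lam mu nu : 'I_k -> int) : nat :=
  #|[pred p : 'S_k * 'S_k |
      in_minrep mu p.1 && in_minrep nu p.2 &&
      `[< exists alpha : 'I_k -> int,
            (forall i, vact mu p.1 i + vact nu p.2 i = lam i + n%:Z * alpha i) /\
            n%:Z * vsum alpha = vsum mu + vsum nu - vsum lam >]]|.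

Definition multinom (N : nat) (s : seq nat) : nat :=
  (N`! %/ \prod_(x <- s) x`!)%N.

(* the sequence m_i(nu), m_{i+n}(nu), m_{i+2n}(nu), ...  (truncated after
   all entries are certainly 0: entries of nu in P_k^+ are <= |nu|) *)
Definition mult_seq (k n : nat) (nu : 'I_k -> int) (i : nat) : seq nat :=
  [seq mult_of nu (i + a * n)%N%:Z | a <- iota 0 (`|vsum nu|%N).+1].

(* Main.v *)
Require Import Defs.
From mathcomp Require Import all_boot all_order all_algebra all_fingroup.
From mathcomp Require Import boolp zify.
Set Implicit Arguments. Unset Strict Implicit. Unset Printing Implicit Defensive.
Import Order.TTheory GRing.Theory Num.Theory.

Lemma card_sum (T : finType) (P : pred T) : #|[pred x | P x]| = (\sum_x (P x : nat))%N.
Proof. by rewrite -sum1_card big_mkcond /=; apply: eq_bigr => x _; rewrite inE; case: (P x). Qed.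

Lemma mult_of_S k (f : 'I_k.+1 -> int) t :
  mult_of f t = ((f ord0 == t) + mult_of (f \o lift ord0) t)%N.
Proof. by rewrite /mult_of !card_sum big_ord_recl. Qed.

Lemma stab_lift k (g : 'I_k -> int) (f : 'I_k.+1 -> int) :
  g = f \o lift ord0 ->
  #|[pred u : 'S_k.+1 | in_stab f u && (u ord0 == ord0)]| = #|[pred u | in_stab g u]|.
Proof.
move=> ->.
pose L := fun s : 'S_k => lift_perm ord0 ord0 s.
have Linj : injective L.
  move=> s t /permP E; apply/permP => x.
  have := E (lift ord0 x); rewrite /L !lift_perm_lift; exact: lift_inj.
rewrite -(card_image Linj); apply: eq_card => u /=.
rewrite inE; apply/idP/imageP => [/andP[Hu /eqP Hu0]|[s Hs ->]]; last first.
  rewrite /L lift_perm_id eqxx andbT; apply/forallP => x.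
  rewrite /vact; case: (unliftP ord0 x) => [y ->|->]; last by rewrite lift_perm_id.
  rewrite lift_perm_lift; move/forallP: Hs => /(_ y); rewrite /vact /=.
  done.
have Hne : forall x, u (lift ord0 x) != ord0.
  move=> x; apply/eqP => E; have : u (lift ord0 x) = u ord0 by rewrite Hu0.
  by move/perm_inj => /eqP; rewrite eq_sym (negbTE (neq_lift _ _)).
pose h := fun x => odflt x (unlift ord0 (u (lift ord0 x))).
have hE : forall x, lift ord0 (h x) = u (lift ord0 x).
  move=> x; rewrite /h; case: (unliftP ord0 (u (lift ord0 x))) => [y ->//|E].
  by have := Hne x; rewrite E eqxx.
have hinj : injective h.
  by move=> x y E; apply: (lift_inj (h:=ord0)); apply: (perm_inj (s:=u)); rewrite -!hE E.
exists (perm hinj).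
  rewrite inE; apply/forallP => x; rewrite /vact /= permE.
  by rewrite hE; move/forallP: Hu => /(_ (lift ord0 x)).
apply/permP => x; rewrite /L.
case: (unliftP ord0 x) => [y ->|->]; last by rewrite lift_perm_id.
by rewrite lift_perm_lift permE hE.
Qed.

Lemma tperm_eqf (T : finType) (R : eqType) (f : T -> R) a b y :
  f a = f b -> f (tperm a b y) = f y.
Proof. by move=> E; case: tpermP => // ->. Qed.

Lemma stab_fiber k (f : 'I_k.+1 -> int) (j : 'I_k.+1) :
  #|[pred u : 'S_k.+1 | in_stab f u && (u ord0 == j)]| =
  ((f j == f ord0) * #|[pred u : 'S_k.+1 | in_stab f u && (u ord0 == ord0)]|)%N.
Proof.
have [E|NE] := eqVneq (f j) (f ord0); last first.
  rewrite mul0n; apply/eqP; rewrite -/(pred0b _); apply/pred0P => u /=.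
  apply/andP => -[/forallP /(_ ord0) H /eqP Hj]; move: H; rewrite /vact Hj.
  by rewrite (negbTE NE).
rewrite mul1n -!sum1_card (reindex_inj (mulIg (tperm ord0 j))) /=.
apply: eq_bigl => u; rewrite !inE permM.
have -> : (tperm ord0 j (u ord0) == j) = (u ord0 == ord0).
  by rewrite -{2}(tpermL ord0 j) (inj_eq perm_inj).
rewrite /in_stab.
congr (_ && _); apply/forallP/forallP => H x; move: (H x); rewrite /vact permM.
  by rewrite tperm_eqf.
by rewrite tperm_eqf.
Qed.

Lemma stab_card k (f : 'I_k -> int) (s : seq int) :
  uniq s -> (forall i, f i \in s) ->
  #|[pred u : 'S_k | in_stab f u]| = (\prod_(t <- s) (mult_of f t)`!)%N.
Proof.
elim: k f => [|k IH] f Us Hs.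
  rewrite big1_seq; last first.
    by move=> t _; rewrite /mult_of card_sum big_ord0.
  rewrite -[1%N]/(0`!) -card_Sn; apply: eq_card => u; rewrite !inE.
  by apply/forallP => -[].
set g := f \o lift ord0.
have -> : (\prod_(t <- s) (mult_of f t)`! =
    mult_of f (f ord0) * \prod_(t <- s) (mult_of g t)`!)%N.
  rewrite !(bigD1_seq (f ord0)) //= {1}mult_of_S eqxx add1n factS -mulnA.
  rewrite mult_of_S eqxx add1n; congr (_ * (_ * _))%N.
  by apply: eq_bigr => t Ht; rewrite mult_of_S eq_sym (negbTE Ht).
rewrite -(IH g Us (fun i => Hs _)) -(stab_lift (f := f)) //.
rewrite -sum1_card (partition_big (fun u : 'S_k.+1 => u ord0) xpredT) //=.
under eq_bigr => j _ do rewrite sum1_card stab_fiber.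
by rewrite -big_distrl /= -card_sum.
Qed.

Lemma card_ltn k m : (m <= k)%N -> #|[pred j : 'I_k | (j < m)%N]| = m.
Proof.
move=> le; rewrite card_sum -(big_mkord xpredT (fun j => (j < m)%N : nat)).
rewrite (@big_cat_nat _ _ _ m 0 k _ _ (leq0n m) le) /= big_nat_cond [X in (_ + X)%N]big_nat_cond.
rewrite (eq_bigr (fun _ => 1%N)); last by move=> i /andP[/andP[_ ->]].
rewrite [X in (_ + X)%N]big1; last by move=> i /andP[/andP[H _] _]; rewrite ltnNge H.
by rewrite addn0 -big_nat_cond sum_nat_const_nat subn0 muln1.
Qed.

Lemma perm_pos k (s : 'S_k) x : #|[pred y | (s y < s x)%N]| = s x.
Proof.
rewrite -sum1_card (reindex_inj (@perm_inj _ s^-1)) /=.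
rewrite (eq_bigl (fun j : 'I_k => (j < s x)%N)); last by move=> j; rewrite !inE permKV.
by rewrite sum1_card card_ltn // ltnW.
Qed.

Local Open Scope ring_scope.


Definition decr k (nu : 'I_k -> int) := forall i j : 'I_k, (i <= j)%N -> nu j <= nu i.

Lemma key_dec k (nu : 'I_k -> int) (x y : 'I_k) : decr nu ->
  ((y < x)%N && (nu x != nu y)) = (nu x < nu y).
Proof.
move=> D; case: (ltnP y x) => H /=.
  by have := D _ _ (ltnW H); rewrite lt_def eq_sym => ->; rewrite andbT.
by apply/esym/negbTE; rewrite -leNgt; apply: D.
Qed.

Definition Einv k (nu : 'I_k -> int) (s : 'S_k) :=
  #|[pred p : 'I_k * 'I_k | (p.1 < p.2)%N && (s p.2 < s p.1)%N && (nu (s p.1) == nu (s p.2))]|.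
Definition Cb k (b : 'I_k -> int) :=
  #|[pred p : 'I_k * 'I_k | (p.1 < p.2)%N && (b p.1 < b p.2)]|.

Lemma length_split k (nu : 'I_k -> int) s : decr nu ->
  perm_length s = (Cb (vact nu s) + Einv nu s)%N.
Proof.
move=> D; rewrite /perm_length -(cardID [pred p : 'I_k * 'I_k | nu (s p.1) == nu (s p.2)]).
rewrite addnC; congr (_ + _)%N; apply: eq_card => p; rewrite !inE /vact.
  rewrite -(key_dec (s p.1) (s p.2) D).
  by case: (nu _ != _); case: (p.1 < p.2)%N; case: (s _ < s _)%N.
Qed.

Definition Phi k (s : 'S_k) := (\sum_(i : 'I_k) i * s i)%N.

Lemma swap_incr k (s : 'S_k) (a b : 'I_k) : (a < b)%N -> (s b < s a)%N ->
  (Phi s < Phi (tperm a b * s))%N.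
Proof.
move=> ab sab; have nab : a != b by rewrite neq_ltn ab.
have E : forall F : 'I_k -> nat, (\sum_i F i = F a + (F b + \sum_(i | (i != a) && (i != b)) F i))%N.
  move=> F; rewrite (bigD1 a) //=; congr (_ + _)%N.
  by rewrite (bigD1 b) 1?eq_sym //=; congr (_ + _)%N; apply: eq_bigl => i; rewrite andbC.
rewrite /Phi !E !permM tpermL tpermR.
rewrite [X in (_ < _ + (_ + X))%N](eq_bigr (fun i : 'I_k => i * s i)%N); last first.
  by move=> i /andP[ia ib]; rewrite permM tpermD // eq_sym.
set R := (\sum_(i | _) _)%N; move: ab sab; rewrite /R.
move: (\sum_(i | _) _)%N (nat_of_ord a) (nat_of_ord b) (nat_of_ord (s a)) (nat_of_ord (s b)).
move=> R0 x y u v xy vu.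
have : (0 < (y - x) * (u - v))%N by rewrite muln_gt0 !subn_gt0 xy vu.
nia.
Qed.

Lemma exists_E0 k (nu : 'I_k -> int) (s : 'S_k) : decr nu ->
  exists s0 : 'S_k, (forall i, nu (s0 i) = nu (s i)) /\ Einv nu s0 = 0%N.
Proof.
move=> D.
have P0 : [forall i, nu (s i) == nu (s i)] by apply/forallP.
case: (@arg_maxnP _ s (fun t : 'S_k => [forall i, nu (t i) == nu (s i)]) (@Phi k) P0).
move=> s0 /forallP H0 M0.
exists s0; split; first by move=> i; apply/eqP.
apply/eqP; rewrite -leqn0 leqNgt; apply/negP => /card_gt0P [p].
rewrite inE => /andP[/andP[p12 sp] /eqP e].
have : [forall i, nu ((tperm p.1 p.2 * s0)%g i) == nu (s i)].
  apply/forallP => i; rewrite permM (@tperm_eqf _ _ (fun x => nu (s0 x))) //.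
move/M0 => /=; rewrite leqNgt => /negP; apply; exact: swap_incr.
Qed.

Lemma minrep_E0 k (nu : 'I_k -> int) s : decr nu -> in_minrep nu s -> Einv nu s = 0%N.
Proof.
move=> D /forallP M.
have [s0 [H0 E0]] := exists_E0 s D.
have Hst : in_stab nu (s^-1 * s0)%g.
  by apply/forallP => i; rewrite /vact permM H0 permKV.
have := M (s^-1 * s0)%g; rewrite Hst /= mulKVg (length_split s D) (length_split s0 D) E0 addn0.
have -> : Cb (vact nu s0) = Cb (vact nu s) by apply: eq_card => p; rewrite !inE /vact !H0.
by rewrite -{2}(addn0 (Cb _)) leq_add2l leqn0 => /eqP.
Qed.

Lemma pos_E0 k (nu : 'I_k -> int) s x : decr nu -> Einv nu s = 0%N ->
  (s x : nat) = #|[pred y | (nu (s x) < nu (s y)) || ((nu (s y) == nu (s x)) && (y < x)%N)]|.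
Proof.
move=> D E0; rewrite -perm_pos; apply: eq_card => y; rewrite !inE.
have Z := card0_eq E0.
case: (eqVneq (nu (s y)) (nu (s x))) => [e|ne] /=.
  rewrite e ltxx /=.
  case: (ltngtP y x) => [yx|xy|/val_inj ->]; last by rewrite ltnn.
  - have := Z (y, x); rewrite !inE /= yx e eqxx /= andbT => /negbT.
    rewrite -leqNgt leq_eqVlt => /orP[/eqP/val_inj/perm_inj E|//].
    by move: yx; rewrite E ltnn.
  - have := Z (x, y); rewrite !inE /= xy e eqxx /= andbT => /negbT.
    by move/negbTE.
rewrite orbF -(key_dec (s x) (s y) D) eq_sym ne andbT.
by [].
Qed.

Lemma uniq_E0 k (nu : 'I_k -> int) s t : decr nu -> Einv nu s = 0%N -> Einv nu t = 0%N ->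
  (forall i, nu (s i) = nu (t i)) -> s = t.
Proof.
move=> D Es Et H; apply/permP => x; apply/val_inj.
rewrite /= (pos_E0 x D Es) (pos_E0 x D Et); apply: eq_card => y; rewrite !inE !H.
by [].
Qed.

Definition rep k (nu : 'I_k -> int) (s : 'S_k) : 'S_k :=
  [arg min_(t < s | [forall i, nu (t i) == nu (s i)]) perm_length t].

Lemma repP k (nu : 'I_k -> int) s :
  in_minrep nu (rep nu s) /\ forall i, nu (rep nu s i) = nu (s i).
Proof.
have P0 : [forall i, nu (s i) == nu (s i)] by apply/forallP.
rewrite /rep; case: (@arg_minnP _ s (fun t : 'S_k => [forall i, nu (t i) == nu (s i)]) (@perm_length k) P0).
move=> r /forallP H M; split; last by move=> i; apply/eqP.
apply/forallP => u; apply/implyP => /forallP Hu; apply: M.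
apply/forallP => i; rewrite permM; move: (Hu (r i)); rewrite /vact => /eqP ->.
exact: H.
Qed.

Lemma stab_coset k (nu : 'I_k -> int) (w : 'S_k) :
  #|[pred s : 'S_k | [forall i, nu (s i) == nu (w i)]]| = #|[pred u : 'S_k | in_stab nu u]|.
Proof.
rewrite -!sum1_card (reindex_inj (mulgI w)) /=; apply: eq_bigl => u; rewrite !inE.
apply/forallP/forallP => H i.
  by move: (H (w^-1 i)%g); rewrite permM permKV /vact.
by rewrite permM; move: (H (w i)); rewrite /vact.
Qed.

Lemma count_minrep k (nu : 'I_k -> int) (F : 'S_k -> bool) : decr nu ->
  (forall s t : 'S_k, (forall i, nu (s i) = nu (t i)) -> F s = F t) ->
  (#|[pred w | in_minrep nu w && F w]| * #|[pred u | in_stab nu u]|)%N = #|[pred w | F w]|.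
Proof.
move=> D FI.
rewrite -[RHS]sum1_card (partition_big (rep nu) [pred w | in_minrep nu w && F w]) /=; last first.
  move=> s Fs; have [R1 R2] := repP nu s; rewrite R1 /=.
  by rewrite (FI _ s R2).
rewrite -sum1_card big_distrl /=; apply: eq_bigr => w /andP[Mw Fw].
rewrite mul1n sum1_card -(stab_coset nu w); apply: eq_card => s; rewrite !inE.
have [R1 R2] := repP nu s.
rewrite unfold_in inE; apply/forallP/andP => [H|[Fs /eqP <-] i]; last by rewrite R2.
have Hs : forall i, nu (s i) = nu (w i) by move=> i; apply/eqP.
split; first by rewrite (FI _ _ Hs).
apply/eqP; apply: uniq_E0 D (minrep_E0 D R1) (minrep_E0 D Mw) _.
by move=> i; rewrite R2.
Qed.

Lemma omod_lt k (x : int) : (0 < k)%N -> (`|((x - 1) %% k%:Z)%Z|%N < k)%N.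
Proof.
move=> hk; have kn0 : k%:Z != 0 by apply/eqP; lia.
have h0 := modz_ge0 (x - 1) kn0.
have h1 : ((x - 1) %% k%:Z)%Z < k%:Z by apply: ltz_pmod; rewrite ltz_nat.
lia.
Qed.

Lemma ext_affE k n (nu : 'I_k -> int) (hk : (0 < k)%N) x :
  ext_aff n nu x = nu (Ordinal (omod_lt x hk)) - ((x - 1) %/ k%:Z)%Z * n%:Z.
Proof.
rewrite /ext_aff; case: insubP => [u _ Hu|/negP []]; last exact: omod_lt.
by congr (nu _ - _); apply: val_inj.
Qed.

Lemma sigma_per k i (m : int) : sigma k i (m + k%:Z) = sigma k i m + k%:Z.
Proof.
have E : forall j : int, (k%:Z %| m + k%:Z - j)%Z = (k%:Z %| m - j)%Z.
  by move=> j; rewrite addrAC rpredDr // dvdzz.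
by rewrite /sigma !E; case: ifP => _; [|case: ifP => _]; rewrite // addrAC.
Qed.

Definition sigmai k (i : nat) (m : int) : int :=
  if (k%:Z %| m - (i.+1)%:Z)%Z then m - 1
  else if (k%:Z %| m - i%:Z)%Z then m + 1
  else m.

Lemma sigmaK k i : cancel (sigma k i) (sigmai k i).
Proof.
move=> m; rewrite /sigma /sigmai.
have [A|nA] := boolP (k%:Z %| m - i%:Z)%Z.
  have -> : m + 1 - (i.+1)%:Z = m - i%:Z by lia.
  by rewrite A addrK.
have [B|nB] := boolP (k%:Z %| m - (i.+1)%:Z)%Z.
  have E1 : m - 1 - i%:Z = m - (i.+1)%:Z by lia.
  case: ifP => [C|_]; last by rewrite E1 B subrK.
  exfalso; move/negP: nA; apply.
  have : (k%:Z %| (m - (i.+1)%:Z) - (m - 1 - (i.+1)%:Z))%Z by rewrite rpredB.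
  have -> : (m - (i.+1)%:Z) - (m - 1 - (i.+1)%:Z) = 1 by lia.
  rewrite dvdz1 => /eqP k1; have k1' : k = 1%N := k1.
  by rewrite k1'; apply/dvdzP; exists (m - i%:Z); rewrite mulr1.
by rewrite (negbTE nB) (negbTE nA).
Qed.

Lemma gen_inj k g : injective (gen_fun k g).
Proof.
case: g => /=.
- by apply: (can_inj (g := tauinv)) => m; rewrite /tau /tauinv subrK.
- by apply: (can_inj (g := tau)) => m; rewrite /tau /tauinv addrK.
- by move=> i; apply: can_inj (@sigmaK k i).
Qed.

Lemma gen_per k g m : gen_fun k g (m + k%:Z) = gen_fun k g m + k%:Z.
Proof.
case: g => /=; rewrite /tau /tauinv; try (move=> *; lia).
by move=> i; apply: sigma_per.
Qed.

Lemma word_inj k ws : injective (word_fun k ws).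
Proof.
elim: ws => [|g ws IH] /=; first by move=> x y.
by move=> x y /= /gen_inj /IH.
Qed.

Lemma word_per k ws m : word_fun k ws (m + k%:Z) = word_fun k ws m + k%:Z.
Proof. by elim: ws m => [|g ws IH] m //=; rewrite IH gen_per. Qed.

Lemma aff_perm k n (hk : (0 < k)%N) (nu nuc : 'I_k -> int) :
  in_aff_orbit n nu nuc -> exists pi : 'S_k, forall j, (n%:Z %| nuc j - nu (pi j))%Z.
Proof.
case=> w [[ws [_ Hw]] Hext].
have winj : injective w by move=> x y E; apply: (@word_inj k ws); rewrite -!Hw.
have wpn : forall x (q : nat), w (x + q%:Z * k%:Z) = w x + q%:Z * k%:Z.
  move=> x; elim=> [|q IH].
    have -> : x + 0%:Z * k%:Z = x by lia.
    lia.
  have -> : x + q.+1%:Z * k%:Z = (x + q%:Z * k%:Z) + k%:Z by lia.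
  by rewrite (Hw (_ + k%:Z)) word_per -Hw IH; lia.
have wp : forall x (q : int), w (x + q * k%:Z) = w x + q * k%:Z.
  move=> x [q|q]; first exact: wpn.
  have := wpn (x + Negz q * k%:Z) q.+1.
  have -> : x + Negz q * k%:Z + q.+1%:Z * k%:Z = x by rewrite NegzE; lia.
  move=> ->; rewrite NegzE; lia.
have kn0 : k%:Z != 0 by apply/eqP; lia.
pose f := fun j : 'I_k => Ordinal (omod_lt (w (j%:Z + 1)) hk).
have finj : injective f.
  move=> j1 j2 /(congr1 val) /= E.
  have h1 := modz_ge0 (w (j1%:Z + 1) - 1) kn0.
  have h2 := modz_ge0 (w (j2%:Z + 1) - 1) kn0.
  have E' : ((w (j1%:Z + 1) - 1) %% k%:Z)%Z = ((w (j2%:Z + 1) - 1) %% k%:Z)%Z by lia.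
  have d1 := divz_eq (w (j1%:Z + 1) - 1) k%:Z.
  have d2 := divz_eq (w (j2%:Z + 1) - 1) k%:Z.
  set q1 := ((w (j1%:Z + 1) - 1) %/ k%:Z)%Z in d1.
  set q2 := ((w (j2%:Z + 1) - 1) %/ k%:Z)%Z in d2.
  have : w (j1%:Z + 1) = w (j2%:Z + 1 + (q1 - q2) * k%:Z) by rewrite wp; lia.
  move/winj => Ej; apply: val_inj => /=.
  have l1 := ltn_ord j1; have l2 := ltn_ord j2.
  move: Ej; move: (q1 - q2) => q Ej.
  have : (q = 0) by nia.
  by move=> q0; move: Ej; rewrite q0 mul0r addr0 => Ej; lia.
exists (perm finj) => j; rewrite permE.
have := Hext (j%:Z + 1); rewrite !ext_affE.
have -> : Ordinal (omod_lt (j%:Z + 1) hk) = j.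
  apply: val_inj => /=; rewrite addrK modz_small //; have := ltn_ord j; lia.
rewrite addrK divz_small; last by have := ltn_ord j; lia.
rewrite mul0r subr0 => ->.
apply/dvdzP; exists (- ((w (j%:Z + 1) - 1) %/ k%:Z)%Z).
rewrite /f; lia.
Qed.

Lemma sum_perm k (f : 'I_k -> int) (w : 'S_k) : \sum_i f (w i) = \sum_i f i.
Proof. by rewrite [RHS](reindex_inj (@perm_inj _ w)). Qed.

Lemma cond_equiv k n (lam mu nu : 'I_k -> int) (w w' : 'S_k) :
  `[< exists alpha : 'I_k -> int,
      (forall i, vact mu w i + vact nu w' i = lam i + n%:Z * alpha i) /\
      n%:Z * vsum alpha = vsum mu + vsum nu - vsum lam >] =
  [forall i, (n%:Z %| mu (w i) + nu (w' i) - lam i)%Z].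
Proof.
apply/asboolP/forallP => [[al [H _]] i|H].
  by apply/dvdzP; exists (al i); rewrite /vact in H; rewrite H; lia.
exists (fun i => ((mu (w i) + nu (w' i) - lam i) %/ n%:Z)%Z); split.
  by move=> i; rewrite /vact mulrC divzK ?H //; lia.
rewrite /vsum mulr_sumr.
under eq_bigr => i _ do rewrite mulrC divzK ?H //.
by rewrite sumrB big_split /= !sum_perm.
Qed.

Lemma Ncoef_sum k n (lam mu nu : 'I_k -> int) :
  Ncoef n lam mu nu = (\sum_(w | in_minrep mu w)
    #|[pred w' | in_minrep nu w' && [forall i, (n%:Z %| (mu (w i) + nu (w' i) - lam i)%R)%Z]]|)%N.
Proof.
rewrite /Ncoef -sum1_card.
under [RHS]eq_bigr => w _ do rewrite -sum1_card.
rewrite pair_big_dep /=; apply: eq_bigl => -[w w'] /=.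
by rewrite !inE /= cond_equiv andbA.
Qed.

Lemma fiber_eq k n (lam mu nu nuc : 'I_k -> int) (w pi : 'S_k) :
  decr nu -> decr nuc -> (forall j, (n%:Z %| nuc j - nu (pi j))%Z) ->
  (#|[pred w' | in_minrep nu w' && [forall i, (n%:Z %| (mu (w i) + nu (w' i) - lam i)%R)%Z]]|
    * #|[pred u | in_stab nu u]|)%N =
  (#|[pred w' | in_minrep nuc w' && [forall i, (n%:Z %| (mu (w i) + nuc (w' i) - lam i)%R)%Z]]|
    * #|[pred u | in_stab nuc u]|)%N.
Proof.
move=> Dnu Dnuc Hpi.
rewrite (count_minrep (F := fun w' : 'S_k => [forall i, (n%:Z %| (mu (w i) + nu (w' i) - lam i)%R)%Z])) //; last first.
  by move=> s t E; apply/forallP/forallP => H i; [rewrite -E | rewrite E].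
rewrite (count_minrep (F := fun w' : 'S_k => [forall i, (n%:Z %| (mu (w i) + nuc (w' i) - lam i)%R)%Z])) //; last first.
  by move=> s t E; apply/forallP/forallP => H i; [rewrite -E | rewrite E].
rewrite -!sum1_card (reindex_inj (mulIg pi)) /=; apply: eq_bigl => s; rewrite !inE.
apply/forallP/forallP => H i; move: (H i); rewrite permM.
  have -> : mu (w i) + nuc (s i) - lam i = (mu (w i) + nu (pi (s i)) - lam i) + (nuc (s i) - nu (pi (s i))) by lia.
  by move=> h; rewrite rpredD.
have -> : mu (w i) + nu (pi (s i)) - lam i = (mu (w i) + nuc (s i) - lam i) - (nuc (s i) - nu (pi (s i))) by lia.
by move=> h; rewrite rpredB.
Qed.

Lemma prod_fact_dvd (s : seq nat) :
  (\prod_(x <- s) x`! %| (\sum_(x <- s) x)`!)%N.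
Proof.
elim: s => [|a s IH]; first by rewrite !big_nil.
rewrite !big_cons.
have H : (a`! * (\sum_(x <- s) x)`! %| (a + \sum_(x <- s) x)`!)%N.
  by rewrite -(bin_fact (leq_addr (\sum_(x <- s) x) a)) addKn dvdn_mull.
exact: dvdn_trans (dvdn_mul (dvdnn _) IH) H.
Qed.

Lemma multinomK N s : N = (\sum_(x <- s) x)%N ->
  (multinom N s * \prod_(x <- s) x`!)%N = N`!.
Proof. by rewrite /multinom => ->; rewrite divnK // prod_fact_dvd. Qed.

Lemma res_perm k n (nu nuc : 'I_k -> int) (pi : 'S_k) (r : int) :
  (forall j, (n%:Z %| nuc j - nu (pi j))%Z) ->
  #|[pred j | (n%:Z %| nuc j - r)%Z]| = #|[pred j | (n%:Z %| nu j - r)%Z]|.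
Proof.
move=> H; rewrite -!sum1_card [in RHS](reindex_inj (@perm_inj _ pi)) /=.
apply: eq_bigl => j; rewrite !inE.
have -> : nuc j - r = (nu (pi j) - r) + (nuc j - nu (pi j)) by lia.
by rewrite rpredDr // H.
Qed.

Lemma res_nuc k n (nuc : 'I_k -> int) (i : nat) : inA n nuc -> (1 <= i <= n)%N ->
  mult_of nuc i%:Z = #|[pred j | (n%:Z %| nuc j - i%:Z)%Z]|.
Proof.
move=> [_ B] /andP[i1 i2]; apply: eq_card => j; rewrite !inE.
have [b1 b2] := B j.
apply/eqP/idP => [->|/dvdzP [q Hq]]; first by rewrite subrr dvdz0.
have : q = 0 by nia.
move=> q0; move: Hq; rewrite q0 mul0r; lia.
Qed.

Lemma le_vsum k (nu : 'I_k -> int) j : inP nu -> nu j <= vsum nu.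
Proof.
move=> [_ P]; rewrite /vsum (bigD1 j) //= lerDl sumr_ge0 // => i _.
Qed.

Lemma res_nu k n (nu : 'I_k -> int) (i : nat) : (0 < n)%N -> inP nu -> (i < n)%N ->
  #|[pred j | (n%:Z %| nu j - i%:Z)%Z]| = (\sum_(x <- mult_seq n nu i) x)%N.
Proof.
move=> n0 Hnu iN.
rewrite /mult_seq big_map card_sum.
under [RHS]eq_bigr => a _ do rewrite /mult_of card_sum.
rewrite exchange_big /=; apply: eq_bigr => j _.
have [_ P] := Hnu; have P0 := P j; have Pv := le_vsum j Hnu.
move: P0 Pv; case E: (nu j) => [v|v] // _ Pv.
have [D|ND] := boolP (n%:Z %| v%:Z - i%:Z)%Z.
  move/dvdzP: D => [q Hq].
  have q0 : 0 <= q by nia.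
  have Hv : v = (i + `|q|%N * n)%N by lia.
  have Ha : (`|q|%N \in iota 0 (`|vsum nu|%N).+1).
    rewrite mem_iota /= add0n ltnS.
    have : (`|q| * n <= v)%N by lia.
    move=> h; apply: leq_trans (leq_pmulr _ n0) (leq_trans h _).
    lia.
  rewrite (bigD1_seq _ Ha (iota_uniq _ _)) /= -Hv eqxx big1_seq ?addn0 //.
  move=> a /andP[na _]; rewrite Hv eqz_nat eqn_add2l eqn_pmul2r //.
  by rewrite eq_sym (negbTE na).
rewrite big1_seq // => a _; apply/eqP; rewrite eqb0; apply: contra ND.
rewrite eqz_nat => /eqP ->; apply/dvdzP; exists a%:Z; lia.
Qed.

Lemma stab_nu k n (nu : 'I_k -> int) : (0 < n)%N -> inP nu ->
  #|[pred u | in_stab nu u]| = (\prod_(i <- iota 0 n) \prod_(x <- mult_seq n nu i) x`!)%N.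
Proof.
move=> n0 Hnu; set A := (`|vsum nu|%N).+1.
rewrite (@stab_card _ _ [seq ((i + a * n)%N)%:Z | i <- iota 0 n, a <- iota 0 A]).
- by rewrite big_allpairs_dep; apply: eq_bigr => i _; rewrite /mult_seq big_map.
- apply: allpairs_uniq; try exact: iota_uniq.
  move=> [z1 w1] [z2 w2] /allpairsP [[u1 v1] [H1 _ [-> ->]]].
  move=> /allpairsP [[u2 v2] [H2 _ [-> ->]]] /= E.
  rewrite !mem_iota /= !add0n in H1 H2.
  move: E; move: u1 u2 v1 v2 H1 H2 => x1 x2 y1 y2 H1 H2 /eqP; rewrite eqz_nat => /eqP E.
  have Ex : x1 = x2.
    by have := congr1 (modn^~ n) E; rewrite /= ![(_ + _ * n)%N]addnC !modnMDl !modn_small.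
  subst x2; move/addnI: E => /eqP; rewrite eqn_pmul2r // => /eqP ->.
  by [].
- move=> j; have [_ P] := Hnu; have P0 := P j; have Pv := le_vsum j Hnu.
  move: P0 Pv; case E: (nu j) => [v|v] // _ Pv.
  apply/allpairsP; exists (v %% n, v %/ n)%N; split.
  + by rewrite mem_iota add0n ltn_pmod.
  + rewrite mem_iota add0n /A ltnS; apply: leq_trans (leq_div _ _) _; lia.
  + by rewrite /= addnC -divn_eq.
Qed.

Lemma stab_nuc k n (nuc : 'I_k -> int) : inA n nuc ->
  #|[pred u | in_stab nuc u]| = (\prod_(i <- iota 1 n) (mult_of nuc i%:Z)`!)%N.
Proof.
move=> [_ B].
rewrite (@stab_card _ _ [seq i%:Z | i <- iota 1 n]).
- by rewrite big_map.
- by rewrite map_inj_uniq ?iota_uniq // => x y [].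
- move=> j; have [b1 b2] := B j; move: b1 b2; case E: (nuc j) => [v|v] // b1 b2.
  by apply/mapP; exists v => //; rewrite mem_iota; lia.
Qed.

Unset Implicit Arguments.

Theorem mainTheorem10 (k n : nat) (hk : (0 < k)%N) (hn : (0 < n)%N)
    (lam mu nu nuc : 'I_k -> int) :
  inA n lam -> inA n mu -> inP nu ->
  inA n nuc -> in_aff_orbit n nu nuc ->
  Ncoef n lam mu nu =
    (Ncoef n lam mu nuc
     * multinom (mult_of nuc n%:Z) (mult_seq n nu 0)
     * \prod_(1 <= i < n) multinom (mult_of nuc i%:Z) (mult_seq n nu i))%N.
Proof.
move=> Hlam Hmu Hnu Hnuc Horb.
have [pi Hpi] := aff_perm hk Horb.
have Dnu : decr nu := Hnu.1.
have Dnuc : decr nuc := Hnuc.1.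
have key : (Ncoef n lam mu nu * #|[pred u | in_stab nu u]| =
            Ncoef n lam mu nuc * #|[pred u | in_stab nuc u]|)%N.
  rewrite !Ncoef_sum !big_distrl /=; apply: eq_bigr => w _; exact: fiber_eq.
have Hsum : forall i, (1 <= i < n)%N -> mult_of nuc i%:Z = (\sum_(x <- mult_seq n nu i) x)%N.
  move=> i /andP[i1 i2].
  rewrite (res_nuc Hnuc); last by rewrite i1 ltnW.
  by rewrite (res_perm _ Hpi) res_nu.
have Hsum0 : mult_of nuc n%:Z = (\sum_(x <- mult_seq n nu 0) x)%N.
  rewrite (res_nuc Hnuc); last by rewrite hn leqnn.
  rewrite (res_perm _ Hpi) -res_nu //; apply: eq_card => j; rewrite !inE subr0.
  by rewrite rpredBr // dvdzz.
set m := n.-1.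
have nm : n = (1 + m)%N by rewrite add1n prednK.
have HS : #|[pred u | in_stab nuc u]| =
   (multinom (mult_of nuc n%:Z) (mult_seq n nu 0)
     * \prod_(1 <= i < n) multinom (mult_of nuc i%:Z) (mult_seq n nu i)
     * #|[pred u | in_stab nu u]|)%N.
  rewrite (stab_nuc Hnuc) (stab_nu hn Hnu).
  have -> : iota 1 n = iota 1 m ++ [:: n] by rewrite {1}nm addnC iotaD -nm.
  have -> : iota 0 n = 0%N :: iota 1 m by rewrite {1}nm.
  rewrite /index_iota subn1 -/m big_cat big_seq1 big_cons /=.
  rewrite mulnACA (multinomK Hsum0) mulnC; congr (_ * _)%N.
  rewrite -big_split /= big_seq [in RHS]big_seq; apply: eq_bigr => i; rewrite mem_iota => Hi.
  rewrite multinomK //; apply: Hsum; move: Hi; rewrite nm; lia.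
move: key; rewrite HS !mulnA.
move/eqP; rewrite eqn_pmul2r; first by move/eqP.
apply/card_gt0P; exists 1%g; rewrite inE; apply/forallP => i; rewrite /vact perm1.
by [].
Qed.
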